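(* For every realization of $X$ and every $\alpha\in(\underline{h},\infty)$, $L_\alpha=\widetilde L_\alpha\cup\Theta$.
   Context: Let $\mathbb{T}=\mathbb{R}/\mathbb{Z}$ with canonical surjection $\phi:\mathbb{R}\to\mathbb{T}$ and quotient distance $d$. Let $\mathcal{U}=\{\varnothing\}\cup\bigcup_{j\ge1}\{0,1\}^j$ be the set of finite words over $\{0,1\}$; for $u=u_1\dots u_j$ write $|u|=j$ ($|\varnothing|=0$), $\pi(u)=u_1\dots u_{j-1}$ for $j\ge1$, $\mathcal{U}^*=\mathcal{U}\setminus\{\varnothing\}$, and $u\mathcal{U}$ for the words $uw$, $w\in\mathcal{U}$. Put $x_u=\phi(\sum_{j=1}^{|u|}u_j2^{-j})$. Let $X=(X_u)_{u\in\mathcal{U}}$ be a $\{0,1\}$-valued family and $\underline{h}>0$. $S=\{u\in\mathcal{U}:X_u=1\}$; $\widetilde S=\{u\in\mathcal{U}^*:X_u=1,X_{\pi(u)}=0\}$; for $\alpha>\underline{h}$, $L_\alpha=\{x\in\mathbb{T}:d(x,x_u)<2^{-\underline{h}|u|/\alpha}\text{ for infinitely many }u\in S\}$ and $\widetilde L_\alpha$ is defined likewise with $\widetilde S$ in place of $S$. For $u\in\mathcal{U}$, $\tau_u=\{v\in u\mathcal{U}:X_{v_1\dots v_j}=1\text{ for all }j\in\{|u|,\dots,|v|\}\}$ and $\partial\tau_u=\{\zeta\in\{0,1\}^{\mathbb{N}}:\zeta_1\dots\zeta_j\in\tau_u\text{ for all }j\ge|u|\}$; $\dot x_\zeta=\sum_{j\ge1}\zeta_j2^{-j}$;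 $\Theta=\phi\big(\{\dot x_\zeta:u\in\mathcal{U},\zeta\in\partial\tau_u\}\big)$. *)

(* Defs.v *)
From Stdlib Require Import Reals List.
Import ListNotations.
Open Scope R_scope.

(* Finite words over {0,1}: lists of booleans; u = u_1 ... u_j. *)
Definition word := list bool.

Definition b2R (b : bool) : R := if b then 1 else 0.

(* sum_{j=1}^{|u|} u_j 2^{-j} (a representative in R of x_u) *)
Fixpoint xw (u : word) : R :=
  match u with
  | [] => 0
  | b :: u' => b2R b / 2 + xw u' / 2
  end.

(* quotient distance on T = R/Z, evaluated on representatives:
   d(phi x, phi y) = distance from x - y to the nearest integer *)
Definition dT (x y : R) : R :=
  Rmin (frac_part (x - y)) (1 - frac_part (x - y)).

Definition same_class (x y : R) : Prop := exists k : Z, x = y + IZR k.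

Definition infinitely_many (P : word -> Prop) : Prop :=
  forall l : list word, exists u, P u /\ ~ In u l.

(* the realisation X : U -> {0,1} is a function word -> bool *)
Definition inS (X : word -> bool) (u : word) : Prop := X u = true.

Definition inStilde (X : word -> bool) (u : word) : Prop :=
  u <> [] /\ X u = true /\ X (removelast u) = false.

Definition radius (h alpha : R) (u : word) : R :=
  Rpower 2 (- (h * INR (length u)) / alpha).

(* L_alpha, as a predicate on representatives x in R of points of T *)
Definition L (X : word -> bool) (h alpha : R) (x : R) : Prop :=
  infinitely_many (fun u => inS X u /\ dT x (xw u) < radius h alpha u).

Definition Ltilde (X : word -> bool) (h alpha : R) (x : R) : Prop :=
  infinitely_many (fun u => inStilde X u /\ dT x (xw u) < radius h alpha u).

Definition tau (X : word -> bool) (u v : word) : Prop :=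
  (exists w, v = u ++ w) /\
  forall j, (length u <= j <= length v)%nat -> X (firstn j v) = true.

(* infinite binary sequences zeta = zeta_1 zeta_2 ...; zeta n stands for
   zeta_{n+1}; prefix zeta j = zeta_1 ... zeta_j *)
Definition prefix (zeta : nat -> bool) (j : nat) : word := map zeta (seq 0 j).

Definition boundary (X : word -> bool) (u : word) (zeta : nat -> bool) : Prop :=
  forall j, (length u <= j)%nat -> tau X u (prefix zeta j).

Definition dotx_is (zeta : nat -> bool) (l : R) : Prop :=
  infinite_sum (fun n => b2R (zeta n) / 2 ^ (S n)) l.

Definition Theta (X : word -> bool) (x : R) : Prop :=
  exists u zeta l, boundary X u zeta /\ dotx_is zeta l /\ same_class x l.

(* Main.v *)
Require Import Defs.
From Stdlib Require Import Reals List Lra Lia ZArith ClassicalEpsilon Classical.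
Import ListNotations.
Open Scope R_scope.

Definition fT (t : R) := Rmin (frac_part t) (1 - frac_part t).

Lemma fT_le t k : fT t <= Rabs (t - IZR k).
Proof.
  unfold fT. pose proof (base_fp t) as [H0 H1]. unfold frac_part in *.
  set (n := Int_part t) in *.
  destruct (Z_le_gt_dec k n) as [Hk|Hk].
  - apply IZR_le in Hk. apply Rle_trans with (t - IZR n).
    apply Rmin_l. rewrite Rabs_right; lra.
  - assert (IZR (n+1) <= IZR k) by (apply IZR_le; lia).
    rewrite plus_IZR in H. apply Rle_trans with (1 - (t - IZR n)).
    apply Rmin_r. rewrite Rabs_left1; lra.
Qed.

Lemma fT_ex t : exists k, fT t = Rabs (t - IZR k).
Proof.
  unfold fT. pose proof (base_fp t) as [H0 H1]. unfold frac_part in *.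
  set (n := Int_part t) in *.
  destruct (Rle_dec (t - IZR n) (1 - (t - IZR n))).
  - exists n. rewrite Rmin_left by lra. rewrite Rabs_right; lra.
  - exists (n+1)%Z. rewrite Rmin_right by lra. rewrite plus_IZR.
    rewrite Rabs_left1; lra.
Qed.

Lemma fT_nonneg t : 0 <= fT t.
Proof. destruct (fT_ex t) as [k ->]. apply Rabs_pos. Qed.

Lemma dT_le_abs x y : dT x y <= Rabs (x - y).
Proof. replace (x - y) with (x - y - IZR 0) by (simpl; ring). apply fT_le. Qed.

Lemma dT_sym x y : dT x y = dT y x.
Proof.
  assert (forall a b, dT a b <= dT b a).
  { intros a b. unfold dT. destruct (fT_ex (b - a)) as [k Hk]. fold (fT (b-a)).
    fold (fT (a-b)). rewrite Hk. replace (Rabs (b - a - IZR k)) with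
      (Rabs (a - b - IZR (-k))). apply fT_le.
    rewrite opp_IZR. rewrite <- Rabs_Ropp. f_equal. ring. }
  apply Rle_antisym; auto.
Qed.

Lemma dT_tri x y z : dT x z <= dT x y + dT y z.
Proof.
  unfold dT; fold (fT (x - z)); fold (fT (x-y)); fold (fT (y-z)).
  destruct (fT_ex (x-y)) as [k1 H1]. destruct (fT_ex (y-z)) as [k2 H2].
  rewrite H1, H2. apply Rle_trans with (Rabs (x - z - IZR (k1+k2))).
  apply fT_le. rewrite plus_IZR.
  replace (x - z - (IZR k1 + IZR k2)) with ((x - y - IZR k1) + (y - z - IZR k2)) by ring.
  apply Rabs_triang.
Qed.

Lemma dT_shift x l y : same_class x l -> dT x y = dT l y.
Proof.
  intros [k ->]. apply Rle_antisym.
  - unfold dT; fold (fT (l + IZR k - y)); fold (fT (l-y)).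
    destruct (fT_ex (l-y)) as [m Hm]. rewrite Hm.
    replace (Rabs (l - y - IZR m)) with (Rabs (l + IZR k - y - IZR (m + k))).
    apply fT_le. rewrite plus_IZR. f_equal. ring.
  - unfold dT; fold (fT (l + IZR k - y)); fold (fT (l-y)).
    destruct (fT_ex (l + IZR k -y)) as [m Hm]. rewrite Hm.
    replace (Rabs (l + IZR k - y - IZR m)) with (Rabs (l - y - IZR (m - k))).
    apply fT_le. rewrite minus_IZR. f_equal. ring.
Qed.

Lemma dT0 x y : dT x y = 0 -> same_class x y.
Proof.
  unfold dT; fold (fT (x-y)). destruct (fT_ex (x-y)) as [k Hk]. rewrite Hk.
  intro H. exists k. destruct (Rcase_abs (x - y - IZR k)); [rewrite Rabs_left in H|rewrite Rabs_right in H]; lra.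
Qed.

Lemma b2R_bound b : 0 <= b2R b <= 1.
Proof. destruct b; simpl; lra. Qed.

Lemma xw_app v w : xw (v ++ w) = xw v + xw w / 2 ^ length v.
Proof.
  induction v as [|b v IH]; simpl. field.
  rewrite IH. field. apply pow_nonzero. lra.
Qed.

Lemma xw_bound w : 0 <= xw w <= 1.
Proof.
  induction w as [|b w IH]; simpl. lra. pose proof (b2R_bound b). lra.
Qed.

Lemma xw_diff v w : 0 <= xw (v ++ w) - xw v <= / 2 ^ length v.
Proof.
  rewrite xw_app. pose proof (xw_bound w).
  assert (0 < 2 ^ length v) by (apply pow_lt; lra).
  unfold Rdiv. split.
  - assert (0 <= xw w * / 2 ^ length v).
    { apply Rmult_le_pos. lra. left; apply Rinv_0_lt_compat; lra. } lra.
  - replace (xw v + xw w * / 2 ^ length v - xw v) with (xw w * / 2 ^ length v) by ring.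
    rewrite <- (Rmult_1_l (/ 2 ^ length v)) at 2. apply Rmult_le_compat_r.
    left; apply Rinv_0_lt_compat; lra. lra.
Qed.

Lemma length_prefix z j : length (prefix z j) = j.
Proof. unfold prefix. rewrite length_map, length_seq. reflexivity. Qed.

Lemma prefix_S z j : prefix z (S j) = prefix z j ++ [z j].
Proof. unfold prefix. rewrite seq_S, map_app. reflexivity. Qed.

Lemma prefix_app z i j : (i <= j)%nat -> exists w, prefix z j = prefix z i ++ w.
Proof.
  intro H. unfold prefix. replace j with (i + (j - i))%nat by lia.
  rewrite seq_app, map_app. eauto.
Qed.

Lemma firstn_prefix z i j : (i <= j)%nat -> firstn i (prefix z j) = prefix z i.
Proof.
  intro H. destruct (prefix_app z i j H) as [w ->].
  pose proof (firstn_app_2 0 (prefix z i) w) as E.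
  rewrite length_prefix, Nat.add_0_r in E. rewrite E. simpl. apply app_nil_r.
Qed.

Definition gz (z : nat -> bool) (n : nat) : R := b2R (z n) / 2 ^ (S n).

Lemma partial_sum z m : xw (prefix z (S m)) = sum_f_R0 (gz z) m.
Proof.
  induction m as [|m IH].
  - simpl. unfold gz. simpl. field.
  - rewrite (prefix_S z (S m)), xw_app, length_prefix, IH. simpl sum_f_R0. f_equal.
    unfold gz. simpl xw. simpl pow. field. apply pow_nonzero; lra.
Qed.

Lemma tail_bound z l n : dotx_is z l ->
  0 <= l - xw (prefix z n) <= / 2 ^ n.
Proof.
  intros Hl.
  assert (key : forall eps, 0 < eps ->
     -eps <= l - xw (prefix z n) <= / 2 ^ n + eps).
  { intros eps He. destruct (Hl eps He) as [N HN].
    specialize (HN (max N n) ltac:(lia)).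
    replace (sum_f_R0 _ (max N n)) with (xw (prefix z (S (max N n)))) in HN by (apply partial_sum). unfold Rdist in HN.
    destruct (prefix_app z n (S (max N n)) ltac:(lia)) as [w Hw].
    rewrite Hw in HN. pose proof (xw_diff (prefix z n) w) as D.
    rewrite length_prefix in D.
    apply Rabs_def2 in HN. lra. }
  split.
  - apply le_epsilon. intros eps He. specialize (key eps He). lra.
  - apply le_epsilon. intros eps He. specialize (key eps He). lra.
Qed.

Lemma dotx_exists z : exists l, dotx_is z l.
Proof.
  destruct (growing_cv (sum_f_R0 (gz z))) as [l Hl].
  - intro n. simpl. unfold gz. pose proof (b2R_bound (z (S n))).
    assert (0 < 2 ^ S (S n)) by (apply pow_lt; lra).
    assert (0 <= b2R (z (S n)) / 2 ^ S (S n)).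
    { unfold Rdiv. apply Rmult_le_pos. lra. left; apply Rinv_0_lt_compat; lra. }
    lra.
  - exists 1. intros r [i ->]. rewrite <- partial_sum. apply xw_bound.
  - exists l. exact Hl.
Qed.

Lemma Rp_pos y : 0 < Rpower 2 y.
Proof. unfold Rpower. apply exp_pos. Qed.

Lemma ln2_pos : 0 < ln 2.
Proof. rewrite <- ln_1. apply ln_increasing; lra. Qed.

Lemma Rp_small c eps : 0 < c -> 0 < eps ->
  exists N, forall n, (N <= n)%nat -> Rpower 2 (-(c * INR n)) < eps.
Proof.
  intros Hc He. pose proof ln2_pos.
  destruct (INR_unbounded (- ln eps / (c * ln 2))) as [N HN].
  exists N. intros n Hn. apply le_INR in Hn.
  unfold Rpower. rewrite <- (exp_ln eps He). apply exp_increasing.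
  assert (c * ln 2 * (- ln eps / (c * ln 2)) < c * ln 2 * INR n).
  { apply Rmult_lt_compat_l. apply Rmult_lt_0_compat; lra. lra. }
  replace (c * ln 2 * (- ln eps / (c * ln 2))) with (- ln eps) in H0 by (field; lra).
  lra.
Qed.

Lemma inv_pow2 n : / 2 ^ n = Rpower 2 (-(INR n)).
Proof. rewrite Rpower_Ropp, Rpower_pow by lra. reflexivity. Qed.

Lemma radius_eq h alpha u : 0 < alpha ->
  radius h alpha u = Rpower 2 (-((h/alpha) * INR (length u))).
Proof. intro. unfold radius. f_equal. field. lra. Qed.

Definition maxlen (ls : list word) : nat := fold_right (fun w m => max (length w) m) 0%nat ls.

Lemma maxlen_in u ls : In u ls -> (length u <= maxlen ls)%nat.
Proof. induction ls; simpl. tauto. intros [->|H]. lia. specialize (IHls H); lia. Qed.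

Lemma gamma_facts h alpha : 0 < h -> h < alpha -> 0 < h/alpha < 1.
Proof.
  intros. split. apply Rdiv_lt_0_compat; lra.
  apply (Rmult_lt_reg_r alpha). lra. unfold Rdiv. rewrite Rmult_assoc, Rinv_l by lra. lra.
Qed.

Lemma Theta_L X h alpha x : 0 < h -> h < alpha -> Theta X x -> L X h alpha x.
Proof.
  intros Hh Ha [u0 [z [l [Hb [Hl Hc]]]]] ls.
  pose proof (gamma_facts h alpha Hh Ha) as Hg.
  set (j := S (max (length u0) (maxlen ls))).
  exists (prefix z j). split; [split|].
  - destruct (Hb j ltac:(unfold j; lia)) as [_ H].
    specialize (H j). rewrite length_prefix, firstn_prefix in H by lia.
    apply H. unfold j; lia.
  - rewrite (dT_shift _ _ _ Hc). eapply Rle_lt_trans. apply dT_le_abs.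
    pose proof (tail_bound z l j Hl). rewrite Rabs_right by lra.
    eapply Rle_lt_trans. apply H. rewrite inv_pow2, radius_eq by lra.
    rewrite length_prefix. apply Rpower_lt. lra.
    assert (0 < INR j) by (apply lt_0_INR; unfold j; lia).
    assert ((h/alpha) * INR j < 1 * INR j) by (apply Rmult_lt_compat_r; lra). lra.
  - intro Hin. apply maxlen_in in Hin. rewrite length_prefix in Hin. unfold j in Hin; lia.
Qed.

Definition near X h alpha x u := inS X u /\ dT x (xw u) < radius h alpha u.
Definition Pw X h alpha x w :=
  infinitely_many (fun u => near X h alpha x u /\ exists r, u = w ++ r).

Lemma not_inf (Q : word -> Prop) : ~ infinitely_many Q -> exists l, forall u, Q u -> In u l.
Proof.
  intro H. apply not_all_ex_not in H. destruct H as [l Hl]. exists l. intros u Hu.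
  apply NNPP. intro Hn. apply Hl. eauto.
Qed.

Lemma Pw_split X h alpha x w : Pw X h alpha x w ->
  Pw X h alpha x (w ++ [false]) \/ Pw X h alpha x (w ++ [true]).
Proof.
  intro H. apply NNPP. intro Hn. apply not_or_and in Hn. destruct Hn as [H0 H1].
  apply not_inf in H0 as [l0 H0]. apply not_inf in H1 as [l1 H1].
  destruct (H (w :: l0 ++ l1)) as [u [[Hu [r ->]] Hnot]].
  apply Hnot. destruct r as [|b r].
  - left. symmetry. apply app_nil_r.
  - right. apply in_or_app. destruct b.
    + right. apply H1. split. exact Hu. exists r. rewrite <- app_assoc. reflexivity.
    + left. apply H0. split. exact Hu. exists r. rewrite <- app_assoc. reflexivity.
Qed.

Lemma estimate h alpha x : 0 < h -> h < alpha -> exists K, forall v w,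
  (K <= length v)%nat -> dT x (xw (v ++ w)) < radius h alpha (v ++ w) ->
  dT x (xw v) < radius h alpha v.
Proof.
  intros Hh Ha. pose proof (gamma_facts h alpha Hh Ha) as Hg.
  set (g := h/alpha) in *.
  assert (Hq : Rpower 2 (- g) < 1).
  { rewrite <- (Rpower_O 2) by lra. apply Rpower_lt; lra. }
  destruct (Rp_small (1 - g) (1 - Rpower 2 (- g)) ltac:(lra) ltac:(lra)) as [K HK].
  exists K. intros v w Hv Hd. destruct w as [|b w].
  - rewrite app_nil_r in Hd. exact Hd.
  - rewrite radius_eq in * by lra. fold g in Hd |- *.
    set (n := length v) in *.
    assert (Hlen : length (v ++ b :: w) = (n + S (length w))%nat) by (rewrite length_app; reflexivity).
    rewrite Hlen in Hd.
    assert (Hru : Rpower 2 (- (g * INR (n + S (length w)))) <= Rpower 2 (-(g * INR n)) * Rpower 2 (-g)).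
    { rewrite <- Rpower_plus. apply Rle_Rpower. lra. rewrite plus_INR, S_INR.
      pose proof (pos_INR (length w)). nra. }
    assert (Hd2 : dT (xw (v ++ b :: w)) (xw v) <= / 2 ^ n).
    { eapply Rle_trans. apply dT_le_abs. pose proof (xw_diff v (b :: w)).
      rewrite Rabs_right by lra. fold n in H. lra. }
    assert (Hsm : / 2 ^ n < Rpower 2 (-(g * INR n)) * (1 - Rpower 2 (- g))).
    { rewrite inv_pow2. replace (- INR n) with (-(g * INR n) + -((1-g) * INR n)) by ring.
      rewrite Rpower_plus. apply Rmult_lt_compat_l. apply Rp_pos. apply HK. exact Hv. }
    pose proof (dT_tri x (xw (v ++ b :: w)) (xw v)). nra.
Qed.

Lemma firstn_S_ex (u : word) j : (j < length u)%nat -> exists b, firstn (S j) u = firstn j u ++ [b].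
Proof.
  revert j. induction u as [|a u IH]; simpl; intros j Hj. lia.
  destruct j as [|j]. exists a. reflexivity.
  destruct (IH j ltac:(lia)) as [b Hb]. exists b. change (a :: firstn (S j) u = a :: (firstn j u ++ [b])). rewrite Hb. reflexivity.
Qed.

Lemma claimC X h alpha x K lt M :
  (forall v w, (K <= length v)%nat -> dT x (xw (v ++ w)) < radius h alpha (v ++ w) ->
     dT x (xw v) < radius h alpha v) ->
  (forall v, inStilde X v /\ dT x (xw v) < radius h alpha v -> In v lt) ->
  (K <= M)%nat -> (maxlen lt < M)%nat ->
  forall u, near X h alpha x u -> forall j, (M <= j <= length u)%nat -> X (firstn j u) = true.
Proof.
  intros HK Hlt HKM HM u [Hu Hd] j Hj.
  assert (G : forall k j, (M <= j)%nat -> (j + k = length u)%nat -> X (firstn j u) = true).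
  { induction k as [|k IH]; intros i Hi Hik.
    - rewrite Nat.add_0_r in Hik. subst i. rewrite firstn_all. exact Hu.
    - destruct (X (firstn i u)) eqn:E. reflexivity. exfalso.
      destruct (firstn_S_ex u i ltac:(lia)) as [b Hb].
      assert (HXv : X (firstn (S i) u) = true) by (apply IH; lia).
      assert (Hlv : length (firstn (S i) u) = S i) by (apply firstn_length_le; lia).
      assert (Hin : In (firstn (S i) u) lt).
      { apply Hlt. split. split.
        - intro Hn. rewrite Hn in Hlv. simpl in Hlv. discriminate.
        - split. exact HXv. rewrite Hb, removelast_last. exact E.
        - apply (HK _ (skipn (S i) u)). lia. rewrite firstn_skipn. exact Hd. }
      apply maxlen_in in Hin. lia. }
  apply (G (length u - j)%nat j); lia.
Qed.

Definition decw (P : word -> Prop) (w : word) : bool :=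
  if excluded_middle_informative (P (w ++ [false])) then false else true.

Fixpoint Wseq (P : word -> Prop) (n : nat) : word :=
  match n with O => [] | S n => Wseq P n ++ [decw P (Wseq P n)] end.

Lemma Wseq_prefix P n : prefix (fun k => decw P (Wseq P k)) n = Wseq P n.
Proof.
  induction n as [|n IH]. reflexivity.
  rewrite prefix_S, IH. reflexivity.
Qed.

Lemma Wseq_P (P : word -> Prop) : (forall w, P w -> P (w ++ [false]) \/ P (w ++ [true])) ->
  P [] -> forall n, P (Wseq P n).
Proof.
  intros Hs H0 n. induction n as [|n IH]. exact H0.
  simpl. unfold decw. destruct (excluded_middle_informative (P (Wseq P n ++ [false]))).
  exact p. destruct (Hs _ IH). contradiction. exact H.
Qed.

Lemma firstn_app_self (a r : word) : firstn (length a) (a ++ r) = a.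
Proof.
  pose proof (firstn_app_2 0 a r) as E. rewrite Nat.add_0_r in E. rewrite E. simpl. apply app_nil_r.
Qed.

Theorem mainTheorem8 (X : word -> bool) (h alpha : R) :
  0 < h -> h < alpha ->
  forall x : R, L X h alpha x <-> (Ltilde X h alpha x \/ Theta X x).
Proof.
  intros Hh Ha x. split.
  - intro HL. destruct (classic (Ltilde X h alpha x)) as [Ht|Hnt]. left; exact Ht. right.
    apply not_inf in Hnt as [lt Hlt].
    destruct (estimate h alpha x Hh Ha) as [K HK].
    set (M := max K (S (maxlen lt))).
    pose proof (claimC X h alpha x K lt M HK Hlt ltac:(unfold M; lia) ltac:(unfold M; lia)) as HC.
    set (P := Pw X h alpha x).
    assert (HP : forall n, P (Wseq P n)).
    { apply Wseq_P. apply Pw_split. intros ls. destruct (HL ls) as [u [Hu Hn]].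
      exists u. split; [split|]; auto. exists u. reflexivity. }
    set (z := fun k => decw P (Wseq P k)).
    assert (Hz : forall n, prefix z n = Wseq P n) by apply Wseq_prefix.
    assert (Hlen : forall n, length (Wseq P n) = n).
    { intro n. rewrite <- Hz. apply length_prefix. }
    destruct (dotx_exists z) as [l Hl].
    exists (prefix z M), z, l. split; [|split; [exact Hl|]].
    + intros j Hj. split.
      * apply prefix_app. rewrite length_prefix in Hj. exact Hj.
      * intros i [Hi1 Hi2]. rewrite length_prefix in Hi1, Hi2.
        rewrite firstn_prefix by lia. rewrite Hz.
        destruct (HP i nil) as [u [[Hu [r Hr]] _]].
        assert (Hf : firstn i u = Wseq P i).
        { rewrite Hr. rewrite <- (Hlen i) at 1. apply firstn_app_self. }
        rewrite <- Hf. apply (HC u Hu). split. lia.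
        rewrite Hr, length_app, Hlen. lia.
    + apply dT0. apply Rle_antisym.
      2: { unfold dT. apply fT_nonneg. }
      apply le_epsilon. intros eps He. rewrite Rplus_0_l.
      pose proof (gamma_facts h alpha Hh Ha) as Hg.
      destruct (Rp_small (h/alpha) (eps/3) ltac:(lra) ltac:(lra)) as [N1 HN1].
      destruct (Rp_small 1 (eps/3) ltac:(lra) ltac:(lra)) as [N2 HN2].
      set (n := max N1 N2).
      specialize (HN1 n ltac:(unfold n; lia)). specialize (HN2 n ltac:(unfold n; lia)).
      rewrite Rmult_1_l, <- inv_pow2 in HN2.
      destruct (HP n nil) as [u [[[Hu Hd] [r Hr]] _]].
      assert (H1 : radius h alpha u <= Rpower 2 (-(h/alpha * INR n))).
      { rewrite radius_eq by lra. apply Rle_Rpower. lra. apply Ropp_le_contravar.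
        apply Rmult_le_compat_l. lra. apply le_INR. rewrite Hr, length_app, Hlen. lia. }
      assert (H2 : dT (xw u) (xw (Wseq P n)) <= / 2 ^ n).
      { eapply Rle_trans. apply dT_le_abs. pose proof (xw_diff (Wseq P n) r).
        rewrite Hlen in H. rewrite Hr. rewrite Rabs_right by lra. lra. }
      assert (H3 : dT (xw (Wseq P n)) l <= / 2 ^ n).
      { eapply Rle_trans. apply dT_le_abs. pose proof (tail_bound z l n Hl).
        rewrite Hz in H. rewrite Rabs_left1 by lra. lra. }
      pose proof (dT_tri x (xw u) l). pose proof (dT_tri (xw u) (xw (Wseq P n)) l).
      lra.
  - intros [Ht|Hth].
    + intro ls. destruct (Ht ls) as [u [[[_ [Hx _]] Hd] Hn]]. exists u. split; [split|]; auto.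
    + apply Theta_L; auto.
Qed.
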